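(* For every integer $n\ge3$, $c_n\ge(\sqrt3/2)^{\varphi(n)}$ (with equality for $n=3$ and $n=6$).
   Context: For $n\ge1$, $\phi_n(X)$ denotes the $n$-th cyclotomic polynomial, of degree $\varphi(n)$ (Euler's totient). For $n\ge3$, $c_n=\inf_{t\in\mathbb R}\phi_n(t)$. *)

(* Defs.v *)
(* Real numbers are modelled by an arbitrary real closed field R
   (the statement is first-order, so this is a generalisation of the case R = reals). *)
From HB Require Import structures.
From mathcomp Require Import all_boot all_order all_algebra all_field.
Set Implicit Arguments. Unset Strict Implicit. Unset Printing Implicit Defensive.
Import Order.TTheory GRing.Theory Num.Theory.
Local Open Scope ring_scope.

Definition cyc_eval (R : rcfType) (n : nat) (t : R) : R :=
  (map_poly (intr : int -> R) 'Phi_n).[t].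

Definition is_cyc_inf (R : rcfType) (n : nat) (c : R) : Prop :=
  (forall t : R, c <= cyc_eval n t) /\
  (forall c' : R, (forall t : R, c' <= cyc_eval n t) -> c' <= c).

(* Main.v *)
Require Import Defs.
From HB Require Import structures.
From mathcomp Require Import all_boot all_order all_algebra all_field.
From mathcomp Require Import ring lra.
Import Order.TTheory GRing.Theory Num.Theory.
Local Open Scope ring_scope.

Lemma uniq_div (T : idomainType) (P : pred nat) (f g : nat -> T) :
  (forall d n, (d %| n)%N -> P n -> P d) ->
  (forall n, (0 < n)%N -> P n -> \prod_(d <- divisors n) f d = \prod_(d <- divisors n) g d) ->
  (forall n, (0 < n)%N -> P n -> f n != 0) ->
  forall n, (0 < n)%N -> P n -> f n = g n.
Proof.
move=> Pdv Hprod Hnz; elim/ltn_ind=> n IH n0 Pn.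
have Hn := Hprod n n0 Pn.
rewrite (big_rem n) ?divisors_id //= [X in _ = X](big_rem n) ?divisors_id //= in Hn.
have E: \prod_(d <- rem n (divisors n)) f d = \prod_(d <- rem n (divisors n)) g d.
  apply: eq_big_seq => d; rewrite mem_rem_uniq ?divisors_uniq // inE => /andP[dn].
  rewrite -dvdn_divisors // => ddn.
  apply: IH; [by rewrite ltn_neqAle dn dvdn_leq | exact: dvdn_gt0 ddn | exact: Pdv ddn Pn].
rewrite -E in Hn; apply: (mulIf _ Hn).
rewrite prodf_seq_neq0; apply/allP => d; rewrite mem_rem_uniq ?divisors_uniq // inE => /andP[dn].
rewrite -dvdn_divisors // => ddn /=.
by apply: Hnz; [exact: dvdn_gt0 ddn | exact: Pdv ddn Pn].
Qed.

Section P.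
Variable R : rcfType.
Definition P (n : nat) : {poly R} := map_poly (intr : int -> R) 'Phi_n.

Lemma P_monic n : P n \is monic.
Proof. by apply: monic_map; apply: Cyclotomic_monic. Qed.

Lemma P_neq0 n : P n != 0.
Proof. exact: monic_neq0 (P_monic n). Qed.

Lemma P_prod n : (0 < n)%N -> \prod_(d <- divisors n) P d = 'X^n - 1.
Proof.
move=> n0; rewrite /P -rmorph_prod /= prod_Cyclotomic //.
by rewrite rmorphB /= map_polyXn rmorph1.
Qed.

Lemma P1 : P 1 = 'X - 1.
Proof. by have := @P_prod 1 (ltn0Sn 0); rewrite big_seq1 expr1. Qed.

Lemma divisors_pm p m : prime p -> (0 < m)%N ->
  perm_eq (divisors (p * m)) ([seq (p * d)%N | d <- divisors m] ++ [seq d <- divisors m | ~~ (p %| d)%N]).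
Proof.
move=> pp m0; have p0 := prime_gt0 pp; have pm0 : (0 < p * m)%N by rewrite muln_gt0 p0.
apply: uniq_perm; first exact: divisors_uniq.
  rewrite cat_uniq map_inj_uniq ?divisors_uniq; last by move=> x y /eqP; rewrite eqn_pmul2l // => /eqP.
  rewrite filter_uniq ?divisors_uniq // andbT /=.
  apply/hasPn => e; rewrite mem_filter => /andP[pe _]; apply/mapP => -[d _ ed].
  by move: pe; rewrite ed dvdn_mulr.
move=> e; rewrite mem_cat mem_filter -!dvdn_divisors //.
apply/idP/idP.
  move=> epm; case pe: (p %| e)%N.
    apply/orP; left; apply/mapP; exists (e %/ p)%N; last by rewrite mulnC divnK.
    by rewrite -dvdn_divisors // -(dvdn_pmul2l p0) [(p * (e %/ p))%N]mulnC divnK.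
  apply/orP; right; rewrite andTb /=.
  by move: epm; rewrite mulnC Gauss_dvdl // coprime_sym prime_coprime // pe.
case/orP => [/mapP [d] | /andP [_]].
  by rewrite -dvdn_divisors // => dm ->; rewrite dvdn_pmul2l.
by move=> em; rewrite dvdn_mull.
Qed.

Lemma P_comp p m : prime p -> (0 < m)%N ->
  P m \Po 'X^p = P (p * m) * (if (p %| m)%N then 1 else P m).
Proof.
move=> pp m0; have p0 := prime_gt0 pp; symmetry.
apply: (@uniq_div _ predT (fun d => P (p * d) * (if (p %| d)%N then 1 else P d)) (fun d => P d \Po 'X^p)) => //.
- move=> k k0 _; rewrite big_split /=.
  rewrite -(big_morph _ (fst (comp_poly_multiplicative _)) (snd (comp_poly_multiplicative _))).
  rewrite P_prod // comp_polyB comp_Xn_poly comp_polyC -exprM -P_prod ?muln_gt0 ?p0 //.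
  rewrite (perm_big _ (divisors_pm p k pp k0)) big_cat /= big_map big_filter.
  congr (_ * _); rewrite [RHS]big_mkcond /=; apply: eq_bigr => d _.
  by case: (p %| d)%N.
- move=> k _ _; rewrite mulf_neq0 ?P_neq0 //; case: (p %| k)%N => //; first exact: oner_neq0.
  exact: P_neq0.
Qed.

Lemma prod_sign1 m : (0 < m)%N ->
  \prod_(d <- divisors m) (if d == 1%N then -1 else 1) = -1 :> {poly R}.
Proof.
move=> m0; rewrite (big_rem 1%N) ?divisor1 //= big1_seq ?mulr1 // => d.
rewrite andTb mem_rem_uniq ?divisors_uniq // inE => /andP[/negPf -> _]; by [].
Qed.

Lemma P_prime p : prime p -> P p = \sum_(i < p) 'X^i.
Proof.
move=> pp; have := @P_comp p 1 pp (ltn0Sn 0); rewrite muln1 dvdn1 ifF ?P1; last first.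
  by apply/negbTE; rewrite neq_ltn prime_gt1 ?orbT.
rewrite comp_polyB comp_polyX comp_polyC subrX1 mulrC => E; apply/esym; apply: (mulIf _ E).
by rewrite subr_eq0; apply/eqP => /(congr1 (size : {poly R} -> nat)); rewrite size_polyX size_polyC oner_neq0.
Qed.

Lemma prod_P2 m : odd m -> \prod_(d <- divisors m) P (2 * d) = 'X^m + 1.
Proof.
move=> om; have m0 : (0 < m)%N by case: m om.
have H : \prod_(d <- divisors m) (P d \Po 'X^2) = (\prod_(d <- divisors m) P (2 * d)) * ('X^m - 1).
  rewrite -P_prod // -big_split /=; apply: eq_big_seq => d; rewrite -dvdn_divisors // => dm.
  rewrite P_comp //; last exact: dvdn_gt0 dm.
  by rewrite ifF //; apply/negbTE; apply: contraL om => /dvdn_trans /(_ dm); rewrite dvdn2 => ->.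
move: H; rewrite -(big_morph _ (fst (comp_poly_multiplicative _)) (snd (comp_poly_multiplicative _))).
rewrite P_prod // comp_polyB comp_Xn_poly comp_polyC -exprM mulnC exprM.
have -> : ('X^m)^+2 - 1 = ('X^m + 1) * ('X^m - 1 : {poly R}) by ring.
move=> E; apply/esym; apply: (mulIf _ E); exact: monic_neq0 (monicXnsubC _ m0).
Qed.

Lemma P_neg m : odd m -> (1 < m)%N -> P (2 * m) = P m \Po (- 'X).
Proof.
move=> om m1; have m0 : (0 < m)%N by apply: ltnW.
suff H : forall k, (0 < k)%N -> odd k -> P (2 * k) * (if k == 1%N then -1 else 1) = P k \Po (- 'X).
  by rewrite -H // ifF ?mulr1 //; apply/negbTE; rewrite neq_ltn m1 orbT.
apply: (@uniq_div _ odd).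
- by move=> d n dn on; apply: contraLR on; rewrite -!dvdn2 => /dvdn_trans; apply.
- move=> k k0 ok; rewrite big_split /= prod_sign1 // prod_P2 //.
  rewrite -(big_morph _ (fst (comp_poly_multiplicative _)) (snd (comp_poly_multiplicative _))).
  rewrite P_prod // comp_polyB comp_Xn_poly comp_polyC exprNn -signr_odd ok expr1.
  by rewrite polyC1; ring.
- move=> k _ _; rewrite mulf_neq0 ?P_neq0 //; case: (k == 1%N); rewrite ?oppr_eq0 oner_neq0 //.
Qed.

Lemma VA r m x : prime r -> (0 < m)%N -> (r %| m)%N -> (P (r * m)).[x] = (P m).[x ^+ r].
Proof. by move=> pr m0 rm; rewrite -hornerXn -horner_comp P_comp // rm mulr1. Qed.

Lemma VB q m x : prime q -> (0 < m)%N -> ~~ (q %| m)%N ->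
  (P (q * m)).[x] * (P m).[x] = (P m).[x ^+ q].
Proof. by move=> pr m0 rm; rewrite -hornerXn -horner_comp P_comp // (negPf rm) hornerM. Qed.

Lemma Vprime p y : prime p -> (P p).[y] = \sum_(i < p) y ^+ i.
Proof. by move=> pp; rewrite P_prime // horner_sum; apply: eq_bigr => i _; rewrite hornerXn. Qed.

Lemma Vneg m x : odd m -> (1 < m)%N -> (P (2 * m)).[x] = (P m).[- x].
Proof. by move=> om m1; rewrite P_neg // horner_comp hornerN hornerX. Qed.

Lemma Pval_prod n x : (0 < n)%N -> \prod_(d <- divisors n) (P d).[x] = x ^+ n - 1.
Proof. by move=> n0; rewrite -horner_prod P_prod // !hornerE. Qed.
End P.

Lemma sum_tot n : (0 < n)%N -> (\sum_(d <- divisors n) totient d)%N = n.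
Proof.
move=> n0; rewrite -{2}(cyclic.sum_totient_dvd n) -(big_mkord (fun d => d %| n)%N totient).
rewrite -[RHS]big_filter. apply: perm_big; apply: uniq_perm; rewrite ?divisors_uniq ?filter_uniq ?iota_uniq // => d.
rewrite mem_filter mem_index_iota -dvdn_divisors //; apply/idP/idP => [dn|/andP[] //].
by rewrite dn /= ltnS dvdn_leq.
Qed.

Lemma prod_signT (T : comNzRingType) m : (0 < m)%N ->
  \prod_(d <- divisors m) (if d == 1%N then -1 else 1) = -1 :> T.
Proof.
move=> m0; rewrite (big_rem 1%N) ?divisor1 //= big1_seq ?mulr1 // => d.
rewrite andTb mem_rem_uniq ?divisors_uniq // inE => /andP[/negPf -> _]; by [].
Qed.

Lemma Vnz (R : rcfType) n d (x : R) : 1 < x -> (0 < n)%N -> (d %| n)%N -> (P R d).[x] != 0.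
Proof.
move=> x1 n0 dn; have := @Pval_prod R n x n0.
have : x ^+ n - 1 != 0.
  by rewrite subr_eq0; apply/eqP => E; move: (exprn_egt1 n x1); rewrite E ltxx; by case: (n) n0.
move=> H E; rewrite -E in H; move: H; rewrite prodf_seq_neq0 => /allP /(_ d).
by rewrite -dvdn_divisors //; move/(_ dn).
Qed.

Lemma Vpal (R : rcfType) n (x : R) : 1 < x -> (1 < n)%N ->
  (P R n).[x] = x ^+ totient n * (P R n).[x^-1].
Proof.
move=> x1 n1; have x0 : x != 0 by apply/eqP => x0; rewrite x0 ltr10 in x1.
suff H : forall k, (0 < k)%N -> true ->
  (P R k).[x] = x ^+ totient k * (P R k).[x^-1] * (if k == 1%N then -1 else 1).
  by rewrite H ?ifF ?mulr1 //; [apply/negbTE; rewrite neq_ltn n1 orbT | apply: ltnW].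
apply: (@uniq_div _ predT) => //.
- move=> k k0 _; rewrite Pval_prod // !big_split /= prod_signT // Pval_prod //.
  rewrite -(big_morph _ (exprD x) (expr0 x)) sum_tot // mulrN1 mulrBr mulr1 -exprMn mulfV // expr1n.
  by rewrite opprB.
- by move=> k k0 _; apply: Vnz x1 k0 _.
Qed.

From mathcomp Require Import zify.
Lemma L4 m : (5 <= m)%N -> (4 * 3 ^ m <= 4 ^ m)%N.
Proof.
elim: m => // m IH; rewrite leq_eqVlt => /orP[/eqP <- // | ]; rewrite ltnS => /IH H.
rewrite !expnS mulnCA; apply: leq_trans (leq_mul (leqnn 3) H) _; by rewrite leq_mul2r orbT.
Qed.
Lemma L9 m : (8 <= m)%N -> (9 * 3 ^ m <= 4 ^ m)%N.
Proof.
elim: m => // m IH; rewrite leq_eqVlt => /orP[/eqP <- // | ]; rewrite ltnS => /IH H.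
rewrite !expnS mulnCA; apply: leq_trans (leq_mul (leqnn 3) H) _; by rewrite leq_mul2r orbT.
Qed.
Lemma L2m m : (11 <= m)%N -> (2 * m * 3 ^ m <= 4 ^ m)%N.
Proof.
elim: m => // m IH; rewrite leq_eqVlt => /orP[/eqP <- | ]; first by vm_compute.
rewrite ltnS => /[dup] m11 /IH H.
rewrite !expnS; apply: leq_trans (leq_mul (leqnn 4) H); set X := (3 ^ m)%N. nia.
Qed.
Lemma arith p q : prime p -> prime q -> (p < q)%N -> ~~ ((p == 2) && ((q == 3) || (q == 5))) ->
  (p ^ 2 * 3 ^ ((p.-1) * (q.-1)) <= 4 ^ ((p.-1) * (q.-1)))%N.
Proof.
move=> pp pq lt ex.
have p2 := prime_gt1 pp.
case: (ltngtP p 3) => [p3|p3|p3].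
- have E : p = 2 by lia.
  subst p; move: ex => /= ex.
  have q7 : (6 < q)%N.
    move: lt pq ex; case: q => [|[|[|[|[|[|[|q]]]]]]] //.
  rewrite mul1n; apply: L4; lia.
- have p5 : (4 < p)%N by move: pp p3; case: (p) => [|[|[|[|[|k]]]]].
  have m11 : (11 <= p.-1 * q.-1)%N by nia.
  apply: (leq_trans _ (L2m _ m11)). rewrite leq_mul2r; apply/orP; right; nia.
- subst p; apply: L9. have q5 : (4 < q)%N by move: lt pq; case: (q) => [|[|[|[|[|k]]]]].
  lia.
Qed.

From Stdlib Require Import Classical.

Section Main.
Variable R : rcfType.
Local Notation P := (P R).

Lemma size_P n : size (P n) = (totient n).+1.
Proof. rewrite /P size_map_inj_poly ?size_Cyclotomic //; exact: intr_inj. Qed.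

Lemma tot_A r m : prime r -> (0 < m)%N -> (r %| m)%N -> totient (r * m) = (r * totient m)%N.
Proof.
move=> pr m0 rm; have := congr1 (fun p : {poly R} => (size p).-1) (@P_comp R _ m pr m0).
by rewrite /= size_comp_poly rm mulr1 !size_P size_polyXn /= mulnC.
Qed.

Lemma tot_B q m : prime q -> (0 < m)%N -> ~~ (q %| m)%N ->
  (totient (q * m) + totient m = q * totient m)%N.
Proof.
move=> pr m0 rm; have := congr1 (fun p : {poly R} => (size p).-1) (@P_comp R _ m pr m0).
rewrite /= size_comp_poly (negPf rm) size_mul ?P_neq0 // !size_P size_polyXn /=. rewrite addnS /= => E; by rewrite [(q * totient m)%N]mulnC E.
Qed.

Lemma tot_neg m : odd m -> (1 < m)%N -> totient (2 * m) = totient m.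
Proof.
move=> om m1; have := congr1 (fun p : {poly R} => size p) (@P_neg R m om m1).
by rewrite /= size_comp_poly2 ?size_opp ?size_polyX // !size_P => -[].
Qed.
End Main.

Lemma dvd_cancel s r m : prime s -> prime r -> s != r -> (s %| r * m)%N -> (s %| m)%N.
Proof. by move=> ps pr sr; rewrite Gauss_dvdr // prime_coprime // dvdn_prime2. Qed.

Section Bound.
Variable R : rcfType.
Local Notation P := (P R).
Definition th : R := Num.sqrt 3 / 2.

Lemma th_gt0 : 0 < th.
Proof. by rewrite /th divr_gt0 // sqrtr_gt0. Qed.

Lemma th2 : th ^+ 2 = 3 / 4.
Proof. by rewrite /th expr_div_n sqr_sqrtr // -natrX. Qed.

Lemma th_le1 : th <= 1.
Proof. have h := th2; have h0 := th_gt0; nra. Qed.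

Lemma thX_ge0 n : 0 <= th ^+ n.
Proof. exact: exprn_ge0 (ltW th_gt0). Qed.

Lemma thX_gt0 n : 0 < th ^+ n.
Proof. exact: exprn_gt0 th_gt0. Qed.

Lemma thX_le1 n : th ^+ n <= 1.
Proof. exact: exprn_ile1 (ltW th_gt0) th_le1. Qed.

Lemma thX_mono m n : (m <= n)%N -> th ^+ n <= th ^+ m.
Proof. by move=> mn; apply: (ler_wiXn2l (ltW th_gt0) th_le1 mn). Qed.

Lemma geo_bounds p (y : R) : (0 < p)%N -> 0 <= y -> y <= 1 ->
  1 <= \sum_(i < p) y ^+ i /\ \sum_(i < p) y ^+ i <= p%:R.
Proof.
move=> p0 y0 y1; split.
  case: p p0 => // p _; rewrite big_ord_recl expr0 lerDl.
  by apply: sumr_ge0 => i _; apply: exprn_ge0.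
have -> : p%:R = \sum_(i < p) (1 : R) by rewrite sumr_const card_ord.
apply: ler_sum => i _; exact: exprn_ile1.
Qed.

Lemma geo_mono p q (x : R) : (0 < q)%N -> 0 <= x -> x <= 1 ->
  \sum_(i < p) (x ^+ q) ^+ i <= \sum_(i < p) x ^+ i.
Proof.
move=> q0 x0 x1; apply: ler_sum => i _; rewrite -exprM mulnC exprM.
case: q q0 => // q _; rewrite exprS -[X in _ <= X]mulr1 ler_wpM2l ?exprn_ge0 //. by apply: exprn_ile1; rewrite ?exprn_ge0 ?exprn_ile1.
Qed.

Definition twop n := exists p q, [/\ prime p, prime q, p != q, (p %| n)%N & (q %| n)%N].
Definition Inv n := forall x : R, 0 <= x -> x <= 1 ->
  th ^+ totient n <= (P n).[x] /\ (P n).[x] * th ^+ totient n <= 1.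
End Bound.

Section Main2.
Variable R : rcfType.
Local Notation P := (P R).
Local Notation th := (th R).

Lemma sq_bound q {x : R} : 0 <= x -> x <= 1 -> 0 <= x ^+ q /\ x ^+ q <= 1.
Proof. by move=> x0 x1; split; [apply: exprn_ge0 | apply: exprn_ile1]. Qed.

Lemma Inv_main n : (0 < n)%N -> twop n -> Inv R n.
Proof.
elim/ltn_ind: n => n IH n0 [p [q [pp qp pq pn qn]]].
case: (classic (exists r, prime r /\ (r * r %| n)%N)) => [[r [pr rrn]] | nosq].
  have r0 := prime_gt0 pr.
  have rn : (r %| n)%N := dvdn_trans (dvdn_mulr r (dvdnn r)) rrn.
  set m := (n %/ r)%N.
  have nE : n = (r * m)%N by rewrite /m mulnC divnK.
  have m0 : (0 < m)%N by rewrite /m divn_gt0 // dvdn_leq.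
  have rm : (r %| m)%N by move: rrn; rewrite {1}nE dvdn_pmul2l.
  have mlt : (m < n)%N by rewrite /m ltn_Pdiv // prime_gt1.
  have sub : forall s, prime s -> (s %| n)%N -> (s %| m)%N.
    move=> s ps sn; case: (eqVneq s r) => [->//|sr]; apply: dvd_cancel ps pr sr _; by rewrite -nE.
  have Im : Inv R m by apply: IH mlt m0 _; exists p, q; split => //; apply: sub.
  move=> x x0 x1; rewrite nE VA // tot_A //.
  have [y0 y1] := sq_bound r x0 x1.
  have [lo hi] := Im _ y0 y1.
  have le : th ^+ (r * totient m) <= th ^+ totient m by apply: thX_mono; rewrite leq_pmull.
  split; first exact: le_trans le lo.
  apply: le_trans hi; apply: ler_wpM2l => //; exact: le_trans (thX_ge0 _ _) lo.
wlog lt : p q pp qp pq pn qn / (p < q)%N.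
  move=> W; case: (ltngtP p q) => [h|h|h]; first exact: (W p q).
    by apply: (W q p) => //; rewrite eq_sym.
  by rewrite h eqxx in pq.
have q0 := prime_gt0 qp.
set m := (n %/ q)%N.
have nE : n = (q * m)%N by rewrite /m mulnC divnK.
have m0 : (0 < m)%N by rewrite /m divn_gt0 // dvdn_leq.
have mlt : (m < n)%N by rewrite /m ltn_Pdiv // prime_gt1.
have qm : ~~ (q %| m)%N.
  by apply/negP => qm; apply: nosq; exists q; split => //; rewrite nE dvdn_pmul2l.
have pm : (p %| m)%N by apply: dvd_cancel pp qp pq _; rewrite -nE.
have q2 : (2 < q)%N by have := prime_gt1 pp; lia.
case: (classic (twop m)) => [Sm | nSm].
  have Im := IH m mlt m0 Sm.
  have Et := @tot_B R _ _ qp m0 qm.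
  move=> x x0 x1; rewrite nE.
  have hB := @VB R _ _ x qp m0 qm.
  have [y0 y1] := sq_bound q x0 x1.
  have [lo hi] := Im x x0 x1.
  have [lo' hi'] := Im _ y0 y1.
  move: hB lo hi lo' hi'.
  set t := totient (q * m); set u := th ^+ totient m.
  set c := (P (q * m)).[x]; set b := (P m).[x]; set a := (P m).[x ^+ q].
  move=> hB lo hi lo' hi'.
  have tu : th ^+ t <= u ^+ 2.
    rewrite /u -exprM; apply: thX_mono; rewrite /t.
    move: Et; rewrite -[in (q * totient m)%N](prednK q0) mulSn addnC => /addnI ->.
    by rewrite [(q.-1 * _)%N]mulnC leq_mul2l; apply/orP; right; rewrite -ltnS prednK.
  have u0 : 0 < u by apply: thX_gt0.
  have b0 : 0 < b by apply: lt_le_trans lo.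
  have cge : u ^+ 2 <= c.
    rewrite -(ler_pM2r b0) hB; apply: le_trans lo'.
    by rewrite expr2 -mulrA -[X in _ <= X]mulr1 ler_wpM2l ?(ltW u0) // mulrC.
  split; first exact: le_trans tu cge.
  have c0 : 0 <= c by apply: le_trans cge; rewrite exprn_ge0 ?(ltW u0).
  apply: le_trans (_ : c * u ^+ 2 <= 1); first by apply: ler_wpM2l.
  rewrite -(ler_pM2r b0) mul1r mulrAC hB; apply: le_trans lo.
  by rewrite expr2 mulrA -[X in _ <= X]mul1r ler_wpM2r ?(ltW u0).
have mp : m = p.
  have mE : m = (p * (m %/ p))%N by rewrite mulnC divnK.
  have k0 : (0 < m %/ p)%N by rewrite divn_gt0 ?prime_gt0 // dvdn_leq.
  case: (ltngtP (m %/ p) 1) => [|k1|k1]; first by rewrite ltnS leqn0 => /eqP k; rewrite k in k0.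
    exfalso; have ps := pdiv_prime k1.
    have sm : (pdiv (m %/ p) %| m)%N by rewrite {2}mE dvdn_mull // pdiv_dvd.
    case: (eqVneq (pdiv (m %/ p)) p) => [sp | sp].
      apply: nosq; exists p; split => //; rewrite nE; apply: (dvdn_trans _ (dvdn_mull q (dvdnn m))).
      by rewrite {1}mE dvdn_pmul2l ?prime_gt0 // -{1}sp pdiv_dvd.
    by apply: nSm; exists (pdiv (m %/ p)), p; split.
  by rewrite mE k1 muln1.
move=> x x0 x1; rewrite nE mp.
rewrite mp in qm.
have Et := @tot_B R _ _ qp (prime_gt0 pp) qm.
rewrite (totient_prime pp) in Et.
have hB := @VB R _ _ x qp (prime_gt0 pp) qm.
rewrite !(@Vprime R p _ pp) in hB.
have [y0 y1] := sq_bound q x0 x1.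
have [B1 Bp] := @geo_bounds R _ _ (prime_gt0 pp) x0 x1.
have [A1 _] := @geo_bounds R _ _ (prime_gt0 pp) y0 y1.
have AB := @geo_mono R p _ _ q0 x0 x1.
move: hB A1 B1 Bp AB.
set t := totient (q * p); set c := (P (q * p)).[x].
set B := \sum_(i < p) x ^+ i; set A := \sum_(i < p) (x ^+ q) ^+ i.
move=> hB A1 B1 Bp AB.
have B0 : 0 < B by apply: lt_le_trans B1.
have c1 : c <= 1 by rewrite -(ler_pM2r B0) mul1r hB.
have c0 : 0 <= c by rewrite -(ler_pM2r B0) mul0r hB; apply: le_trans A1.
split; last by rewrite -[X in _ <= X]mulr1 ler_pM ?thX_ge0 ?thX_le1.
rewrite -(ler_pM2r B0) hB.
have tE : t = (p.-1 * q.-1)%N.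
  rewrite /t; move: Et; rewrite -[in (q * p.-1)%N](prednK q0) mulSn addnC => /addnI ->; exact: mulnC.
case: (boolP ((p == 2) && ((q == 3) || (q == 5)))) => [/andP[/eqP p2 /orP[/eqP q3|/eqP q5]] | ex].
- rewrite /A /B tE p2 q3 /= !big_ord_recr !big_ord0 /= !add0r !expr0 !expr1.
  have -> : th ^+ 2 = 3 / 4 by apply: th2.
  have h : 0 <= (x + 1) * (2 * x - 1) ^+ 2 by apply: mulr_ge0; [lra | exact: sqr_ge0].
  rewrite !exprS expr0 !mulr1 in h *; nra.
- rewrite /A /B tE p2 q5 /= !big_ord_recr !big_ord0 /= !add0r !expr0 !expr1.
  have -> : th ^+ 4 = 9 / 16 by rewrite (_ : 4 = 2 * 2)%N // exprM th2; field.
  have x5 : 0 <= x ^+ 5 by apply: exprn_ge0.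
  case: (lerP x (3/4)) => hx; first lra.
  have h5 : (3/4) ^+ 5 <= x ^+ 5.
    by apply: lerXn2r; rewrite ?nnegrE //; lra.
  rewrite !exprS expr0 !mulr1 in h5; lra.
- have H := arith p q pp qp lt ex; rewrite -tE in H.
  have HR : (p%:R ^+ 2 * 3 ^+ t <= 4 ^+ t :> R) by rewrite -(ler_nat R) natrM !natrX in H.
  have thp : th ^+ t * p%:R <= 1.
    have sq : (th ^+ t * p%:R) ^+ 2 <= 1.
      rewrite exprMn -exprM mulnC exprM th2 expr_div_n.
      by rewrite mulrAC ler_pdivrMr ?exprn_gt0 // mul1r mulrC.
    case: (lerP (th ^+ t * p%:R) 1) => // h.
    by have := exprn_egt1 2 h; rewrite ltNge sq.
  apply: le_trans A1; apply: le_trans thp; apply: ler_wpM2l => //; exact: thX_ge0.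
Qed.

Lemma Lmain n : (1 < n)%N -> forall x : R, 0 <= x -> x <= 1 -> th ^+ totient n <= (P n).[x].
Proof.
elim/ltn_ind: n => n IH n1 x x0 x1.
case: (classic (twop n)) => [Sn | nS].
  by case: (@Inv_main n (ltnW n1) Sn x x0 x1).
case: (classic (exists r, prime r /\ (r * r %| n)%N)) => [[r [pr rrn]] | nosq].
  have r0 := prime_gt0 pr.
  have rn : (r %| n)%N := dvdn_trans (dvdn_mulr r (dvdnn r)) rrn.
  set m := (n %/ r)%N.
  have nE : n = (r * m)%N by rewrite /m mulnC divnK.
  have m0 : (0 < m)%N by rewrite /m divn_gt0 // dvdn_leq // ltnW.
  have rm : (r %| m)%N by move: rrn; rewrite {1}nE dvdn_pmul2l.
  have mlt : (m < n)%N by rewrite /m ltn_Pdiv ?prime_gt1 // ltnW.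
  have m1 : (1 < m)%N by apply: leq_trans (prime_gt1 pr) (dvdn_leq m0 rm).
  have [y0 y1] := sq_bound r x0 x1.
  rewrite nE VA // tot_A //.
  apply: le_trans (IH m mlt m1 _ y0 y1); apply: thX_mono; by rewrite leq_pmull.
have pn : prime n.
  have n0 := ltnW n1; have pr := pdiv_prime n1.
  have nE : n = (pdiv n * (n %/ pdiv n))%N by rewrite mulnC divnK // pdiv_dvd.
  case: (ltngtP (n %/ pdiv n) 1) => [|k1|k1].
  - by rewrite ltnS leqn0 => /eqP k; rewrite k muln0 in nE; rewrite nE in n1.
  - exfalso; have ps := pdiv_prime k1.
    case: (eqVneq (pdiv (n %/ pdiv n)) (pdiv n)) => [sr | sr].
      apply: nosq; exists (pdiv n); split => //.
      by rewrite [X in (_ %| X)%N]nE dvdn_pmul2l ?prime_gt0 // -{1}sr pdiv_dvd.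
    apply: nS; exists (pdiv (n %/ pdiv n)), (pdiv n); split => //; last exact: pdiv_dvd.
    by rewrite [X in (_ %| X)%N]nE dvdn_mull // pdiv_dvd.
  - by rewrite nE k1 muln1.
rewrite Vprime // (totient_prime pn).
have [B1 _] := @geo_bounds R _ _ (prime_gt0 pn) x0 x1.
exact: le_trans (thX_le1 _ _) B1.
Qed.

Lemma Lpos n t : (1 < n)%N -> 0 <= t -> th ^+ totient n <= (P n).[t].
Proof.
move=> n1 t0; case: (lerP t 1) => [t1 | t1]; first exact: Lmain.
rewrite (@Vpal R n t t1 n1).
have tp : 0 < t by apply: lt_trans t1; exact: ltr01.
have ti0 : 0 <= t^-1 by rewrite invr_ge0.
have ti1 : t^-1 <= 1 by rewrite invf_le1 // ltW.
have h := @Lmain n n1 _ ti0 ti1.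
apply: (le_trans h); apply: ler_peMl; [exact: le_trans (thX_ge0 _ _) h | exact: exprn_ege1 (ltW t1)].
Qed.

Lemma Lall n t : (2 < n)%N -> th ^+ totient n <= (P n).[t].
Proof.
move=> n2; case: (lerP 0 t) => [t0 | t0]; first by apply: Lpos => //; apply: ltnW.
have nt0 : 0 <= - t by rewrite oppr_ge0 ltW.
case: (boolP (odd n)) => on.
  rewrite -[t]opprK -(@Vneg R n (- t) on (ltnW n2)) -(@tot_neg R n on (ltnW n2)).
  by apply: Lpos => //; lia.
have nE : n = (2 * (n %/ 2))%N by rewrite mulnC divnK // dvdn2.
move: nE; set m := (n %/ 2)%N => nE.
case: (boolP (odd m)) => om.
  have m1 : (1 < m)%N by lia.
  by rewrite nE (@Vneg R m _ om m1) (@tot_neg R m om m1); apply: Lpos.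
have m0 : (0 < m)%N by lia.
have E : (P n).[t] = (P n).[- t] by rewrite nE !(@VA R 2 m) ?sqrrN // dvdn2.
by rewrite E; apply: Lpos => //; lia.
Qed.
End Main2.

Theorem proposition4p3 (R : rcfType) :
  (forall (n : nat) (c : R), (3 <= n)%N -> is_cyc_inf n c ->
     (Num.sqrt 3 / 2) ^+ totient n <= c) /\
  is_cyc_inf 3 ((Num.sqrt (3 : R) / 2) ^+ totient 3) /\
  is_cyc_inf 6 ((Num.sqrt (3 : R) / 2) ^+ totient 6).
Proof.
have key : forall n (t : R), (3 <= n)%N -> (Num.sqrt 3 / 2) ^+ totient n <= cyc_eval n t.
  by move=> n t n3; apply: (@Lall R n t n3).
have t3 : totient 3 = 2%N by rewrite (@totient_prime 3).
have t6 : totient 6 = 2%N by rewrite (@tot_neg R 3) // t3.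
have th2' : (Num.sqrt (3 : R) / 2) ^+ 2 = 3 / 4 by apply: (th2 R).
have v3 : cyc_eval 3 (- (1 / 2)) = 3 / 4 :> R.
  rewrite /cyc_eval -/(P R 3) (@Vprime R 3) //.
  by rewrite !big_ord_recr big_ord0 /= !expr0 expr1 expr2; field.
have v6 : cyc_eval 6 (1 / 2) = 3 / 4 :> R.
  by rewrite /cyc_eval -/(P R 6) (_ : 6 = 2 * 3)%N // (@Vneg R 3) // -/(cyc_eval 3 _) v3.
split; first by move=> n c n3 [_ H]; apply: H => t; apply: key.
split; split.
- by move=> t; apply: key.
- by move=> c' H; rewrite t3 th2' -v3; apply: H.
- by move=> t; apply: key.
- by move=> c' H; rewrite t6 th2' -v6; apply: H.
Qed.
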